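(* Let $\mathbf{k}$ be a field of characteristic zero, $n\ge4$, and $S=(a_1,\dots,a_n)$ with all $a_i$ positive integers. Let $B_S=\mathbf{k}[X_1,\dots,X_n]/\langle X_1^{a_1}+\cdots+X_n^{a_n}\rangle=\mathbf{k}[x_1,\dots,x_n]$ where $x_i$ is the image of $X_i$, let $L=\mathrm{lcm}(S)$ and $(d_1,\dots,d_n)=(L/a_1,\dots,L/a_n)$. Then: (a) $\gcd(d_1,\dots,d_n)=1$ and $\mathrm{type}(d_1,\dots,d_n)=\mathrm{cotype}(a_1,\dots,a_n)$. (b) For each $i\in\{1,\dots,n\}$: $\gcd(d_1,\dots,\widehat{d_i},\dots,d_n)\neq1 \iff \mathrm{lcm}(a_1,\dots,\widehat{a_i},\dots,a_n)\neq\mathrm{lcm}(S)\iff i\in J(S)$. (c) $x_1,\dots,x_n$ are homogeneous prime elements of $B_S$ (with respect to the standard $\mathbb{N}$-grading) and are pairwise non-associates.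
   Context: The standard $\mathbb{N}$-grading of $B_S$ is the unique $\mathbb{N}$-grading in which each $x_i$ is homogeneous of degree $d_i=L/a_i$. For a tuple $T=(t_1,\dots,t_n)$: $T_i$ is $T$ with the $i$-th entry omitted; $J^*(T)=\{i:\gcd(T_i)\neq\gcd(T)\}$, $\mathrm{type}(T)=|J^*(T)|$; $J(T)=\{i: t_i\nmid \mathrm{lcm}(T_i)\}$, $\mathrm{cotype}(T)=|J(T)|$. A hat denotes omission. *)

(* Defs.v *)
From HB Require Import structures.
From mathcomp Require Import all_boot all_order all_algebra.
From mathcomp Require Import mpoly.
Set Implicit Arguments. Unset Strict Implicit. Unset Printing Implicit Defensive.
Import GRing.Theory.
Local Open Scope ring_scope.

Definition gcdT n (t : 'I_n -> nat) : nat := \big[gcdn/0%N]_(i < n) t i.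
Definition lcmT n (t : 'I_n -> nat) : nat := \big[lcmn/1%N]_(i < n) t i.
Definition gcd_hat n (t : 'I_n -> nat) (i : 'I_n) : nat :=
  \big[gcdn/0%N]_(j < n | j != i) t j.
Definition lcm_hat n (t : 'I_n -> nat) (i : 'I_n) : nat :=
  \big[lcmn/1%N]_(j < n | j != i) t j.
Definition Jstar n (t : 'I_n -> nat) : {set 'I_n} :=
  [set i | gcd_hat t i != gcdT t].
Definition typeT n (t : 'I_n -> nat) : nat := #|Jstar t|.
Definition Jset n (t : 'I_n -> nat) : {set 'I_n} :=
  [set i | ~~ (t i %| lcm_hat t i)%N].
Definition cotypeT n (t : 'I_n -> nat) : nat := #|Jset t|.

Definition dvec n (a : 'I_n -> nat) : 'I_n -> nat := fun i => (lcmT a %/ a i)%N.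

Definition fS (k : fieldType) n (a : 'I_n -> nat) : {mpoly k[n]} :=
  \sum_(i < n) 'X_i ^+ a i.

Definition dvdr (R : comNzRingType) (x y : R) : Prop := exists c, y = x * c.
Definition is_unit (R : comNzRingType) (u : R) : Prop := exists v, u * v = 1.
Definition prime_elt (R : comNzRingType) (p : R) : Prop :=
  [/\ p <> 0, ~ is_unit p &
      forall x y, dvdr p (x * y) -> dvdr p x \/ dvdr p y].
Definition associates (R : comNzRingType) (x y : R) : Prop :=
  exists u, is_unit u /\ x = u * y.

Definition whomog (k : fieldType) n (w : 'I_n -> nat) (e : nat)
  (p : {mpoly k[n]}) : Prop :=
  forall m, m \in msupp p -> (\sum_(i < n) w i * m i)%N = e.

(* B is presented as k[X]/<f> through the surjection pi with kernel <f>. *)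
Definition is_quotient_by (k : fieldType) n (f : {mpoly k[n]})
  (B : comNzRingType) (pi : {rmorphism {mpoly k[n]} -> B}) : Prop :=
  (forall b : B, exists p, pi p = b) /\
  (forall p, pi p = 0 <-> exists q, p = f * q).

(* Standard N-grading on B_S: the degree-e component is (the set of b satisfying homog_elt w pi e b), the image of the
   polynomials that are weighted-homogeneous of degree e for weights d. *)
Definition homog_elt (k : fieldType) n (w : 'I_n -> nat)
  (B : comNzRingType) (pi : {rmorphism {mpoly k[n]} -> B}) (e : nat) (b : B)
  : Prop :=
  exists p, whomog w e p /\ pi p = b.

(* Main.v *)
Require Import Defs.
From HB Require Import structures.
From mathcomp Require Import all_boot all_order all_algebra.
From mathcomp Require Import mpoly.
From Stdlib Require Import Classical.
From mathcomp Require Import zify.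
From mathcomp Require Import ring.
Import GRing.Theory.

Lemma gcd_div_pair (L x y : nat) : 0 < x -> 0 < y -> 0 < L -> x %| L -> y %| L ->
  gcdn (L %/ x) (L %/ y) = L %/ lcmn x y.
Proof.
move=> x0 y0 L0 xL yL.
have g0 : 0 < gcdn x y by rewrite gcdn_gt0 x0.
have H : gcdn (L %/ x) (L %/ y) * lcmn x y = L.
  apply/eqP; rewrite -(eqn_pmul2r g0) -mulnA muln_lcm_gcd.
  rewrite muln_gcdl mulnA divnK // [x * y]mulnC mulnA divnK //.
  by rewrite -muln_gcdr gcdnC.
by rewrite -[in RHS]H mulnK // lcmn_gt0 x0 y0.
Qed.

Lemma big_gcd_div (I : eqType) (r : seq I) (P : pred I) (a : I -> nat) (L : nat) :
  0 < L -> (forall j, P j -> 0 < a j /\ a j %| L) -> has P r ->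
  \big[gcdn/0]_(j <- r | P j) (L %/ a j) = L %/ \big[lcmn/1]_(j <- r | P j) a j.
Proof.
move=> L0 Ha; elim: r => [//|x r IH] /=.
rewrite !big_cons; case Px: (P x) => /=; last exact: IH.
move=> _; have [x0 xL] := Ha x Px.
case hr: (has P r).
  rewrite IH // gcd_div_pair //.
  - apply: (big_ind (fun v => 0 < v)) => // [u v|j /Ha []//].
    by rewrite lcmn_gt0 => -> ->.
  - apply: (big_ind (fun v => v %| L)) => // [u v|j /Ha []//].
    by rewrite dvdn_lcm => -> ->.
rewrite big_hasC ?hr // big_hasC ?hr //.
by rewrite gcdn0 lcmn1.
Qed.

Lemma part_ab n (a : 'I_n -> nat) : (4 <= n) -> (forall i, 0 < a i) ->
 (gcdT (dvec a) = 1 /\ typeT (dvec a) = cotypeT a) /\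
 (forall i : 'I_n, (gcd_hat (dvec a) i != 1 <-> lcm_hat a i != lcmT a) /\
   (lcm_hat a i != lcmT a <-> i \in Jset a)).
Proof.
move=> n4 a0.
set L := lcmT a.
have L0 : 0 < L.
  by apply: (big_ind (fun v => 0 < v)) => // u v; rewrite lcmn_gt0 => -> ->.
have Lsplit i : L = lcmn (a i) (lcm_hat a i).
  by rewrite /L /lcmT (bigD1 i) //=.
have aL j : a j %| L by rewrite (Lsplit j) dvdn_lcml.
have ML i : lcm_hat a i %| L by rewrite (Lsplit i) dvdn_lcmr.
have M0 i : 0 < lcm_hat a i.
  by apply: (big_ind (fun v => 0 < v)) => // u v; rewrite lcmn_gt0 => -> ->.
have Pj : forall j : 'I_n, true -> 0 < a j /\ a j %| L by move=> j _; split.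
have gT : gcdT (dvec a) = 1.
  rewrite /gcdT /dvec -/L big_gcd_div //; last first.
    by apply/hasP; exists (Ordinal (leq_trans (isT : 0 < 4) n4)); rewrite ?mem_index_enum.
  by rewrite divnn L0.
have gH i : gcd_hat (dvec a) i = L %/ lcm_hat a i.
  rewrite /gcd_hat /dvec -/L big_gcd_div //.
  apply/hasP.
  have [j ji] : exists j : 'I_n, j != i.
    case: (eqVneq i (Ordinal (leq_trans (isT : 0 < 4) n4))) => [->|h].
      by exists (Ordinal (leq_trans (isT : 1 < 4) n4)).
    by exists (Ordinal (leq_trans (isT : 0 < 4) n4)); rewrite eq_sym.
  by exists j; rewrite ?mem_index_enum.
have b1 i : (gcd_hat (dvec a) i != 1 <-> lcm_hat a i != L).
  rewrite gH; split; apply: contra_neq.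
    by move=> ->; rewrite divnn L0.
  move=> h; move: (divnK (ML i)); rewrite h mul1n; done.
have b2 i : (lcm_hat a i != L <-> i \in Jset a).
  rewrite inE (Lsplit i); split; apply: contraNN.
    by move=> /lcmn_idPr ->.
  by move=> /eqP ->; rewrite dvdn_lcml.
split; last by move=> i; split; [apply: b1| apply: b2].
split => //.
rewrite /typeT /cotypeT; apply: eq_card => i.
rewrite !inE gT; apply/idP/idP => h.
  by move: (proj1 (b2 i) (proj1 (b1 i) h)); rewrite inE.
by apply/(proj2 (b1 i))/(proj2 (b2 i)); rewrite inE.
Qed.

Local Open Scope ring_scope.
Lemma alg_id (R : comNzRingType) (P Q D t q1 q2 : R) : P * Q = D * t ->
  (P - q1 * D) * (Q - q2 * D) = D * (t - q1 * Q - q2 * P + q1 * q2 * D).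
Proof.
move=> e.
have -> : (P - q1 * D) * (Q - q2 * D) = P * Q - D * (q1 * Q + q2 * P - q1 * q2 * D) by ring.
rewrite e; ring.
Qed.
Lemma alg2 (R : comNzRingType) (p s0 X r g u f Y : R) : p - s0 = X * r -> s0 = g * u ->
  f = X * Y + g -> p = X * (r - Y * u) + f * u.
Proof.
move=> h1 h2 h3; rewrite h3.
have -> : p = (p - s0) + s0 by ring.
rewrite h1 h2; ring.
Qed.

Set Implicit Arguments. Unset Strict Implicit.


Definition Dv (R : comNzRingType) (x y : R) : Prop := exists c, y = x * c.

Section DvTheory.
Variable R : comNzRingType.
Implicit Types x y z : R.
Lemma Dv0 x : Dv x 0. Proof. by exists 0; rewrite mulr0. Qed.
Lemma DvD x y z : Dv x y -> Dv x z -> Dv x (y + z).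
Proof. by move=> [c ->] [d ->]; exists (c + d); rewrite mulrDr. Qed.
Lemma DvN x y : Dv x y -> Dv x (- y).
Proof. by move=> [c ->]; exists (- c); rewrite mulrN. Qed.
Lemma DvB x y z : Dv x y -> Dv x z -> Dv x (y - z).
Proof. by move=> h1 h2; apply: DvD => //; apply: DvN. Qed.
Lemma DvMr x y z : Dv x y -> Dv x (y * z).
Proof. by move=> [c ->]; exists (c * z); rewrite mulrA. Qed.
Lemma DvMl x y z : Dv x y -> Dv x (z * y).
Proof. by move=> h; rewrite mulrC; apply: DvMr. Qed.
Lemma Dv_sum x (I : Type) (r : seq I) (P : pred I) (F : I -> R) :
  (forall i, P i -> Dv x (F i)) -> Dv x (\sum_(i <- r | P i) F i).
Proof.
move=> h; apply: (big_ind (Dv x)); [exact: Dv0| exact: DvD| exact: h].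
Qed.
Lemma DvMM x y z w : Dv x y -> Dv z w -> Dv (x * z) (y * w).
Proof. by move=> [c ->] [d ->]; exists (c * d); rewrite mulrACA. Qed.
End DvTheory.

Lemma min_ex (P : nat -> Prop) : (exists i, P i) -> exists i, P i /\ forall j, (j < i)%N -> ~ P j.
Proof.
move=> [i Pi]; elim: i {-2}i (leqnn i) Pi => [|m IH] i.
  rewrite leqn0 => /eqP -> P0; exists 0%N; split => //.
case: (ltngtP i m.+1) => // [/IH h _ Pi|-> _ Pm]; first exact: h.
case: (classic (exists j, (j < m.+1)%N /\ P j)) => [[j [jm Pj]]|no].
  by apply: (IH j) => //.
exists m.+1; split => // j jm Pj; apply: no; exists j; split => //.
Qed.

Section Core.
Variable R : idomainType.
Variables (p h : R) (a : nat).
Hypothesis p0 : p != 0.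
Hypothesis pprime : forall r s : R, Dv p (r * s) -> Dv p r \/ Dv p s.
Hypothesis ph : Dv p h.
Hypothesis ph2 : ~ Dv (p * p) h.

Let G : {poly R} := 'X^a + h%:P.

Lemma coefG s k : (G * s)`_k = (if (k < a)%N then 0 else s`_(k - a)) + h * s`_k.
Proof. by rewrite /G mulrDl coefD coefXnM coefCM. Qed.

Lemma core1 (u w s : {poly R}) : (size u <= a)%N -> (size w <= a)%N ->
  u * w = G * s -> (exists i, ~ Dv p u`_i) -> (exists j, ~ Dv p w`_j) -> False.
Proof.
move=> su sw E /min_ex [i0 [ni0 mi0]] /min_ex [j0 [nj0 mj0]].
have mi i : (i < i0)%N -> Dv p u`_i by move=> /mi0 /NNPP.
have mj j : (j < j0)%N -> Dv p w`_j by move=> /mj0 /NNPP.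
have i0a : (i0 < a)%N.
  rewrite ltnNge; apply/negP => hi; apply: ni0.
  by rewrite nth_default ?(leq_trans su hi) //; apply: Dv0.
have j0a : (j0 < a)%N.
  rewrite ltnNge; apply/negP => hj; apply: nj0.
  by rewrite nth_default ?(leq_trans sw hj) //; apply: Dv0.
have B : ~ Dv p (u`_i0 * w`_j0) by case/pprime.
have A : ~ Dv p ((u * w)`_(i0 + j0)).
  move=> hA; apply: B.
  rewrite coefM (bigD1 (Ordinal (leq_addr j0 i0.+1))) //= addKn in hA.
  have hR : Dv p (\sum_(j < (i0 + j0).+1 | j != Ordinal (leq_addr j0 i0.+1)) u`_j * w`_(i0 + j0 - j)).
    apply: Dv_sum => j hj.
    have : (j : nat) != i0 by [].
    case: (ltngtP j i0) => // hji _.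
      by apply: DvMr; apply: mi.
    apply: DvMl; apply: mj.
    have jle : (j <= i0 + j0)%N by rewrite -ltnS ltn_ord.
    by rewrite ltn_subLR // ltn_add2r.
  by have := DvB hA hR; rewrite addrK.
rewrite E coefG in A.
case: ltnP A => hk A.
  by apply: A; rewrite add0r; apply: DvMr.
set k := (i0 + j0 - a)%N in A.
have ka : (k < a)%N by rewrite /k; lia.
have ki0 : (k < i0)%N by rewrite /k; lia.
have kj0 : (k < j0)%N by rewrite /k; lia.
have C : Dv (p * p) ((u * w)`_k).
  rewrite coefM; apply: Dv_sum => j _.
  apply: DvMM; first by apply: mi; apply: leq_ltn_trans ki0; rewrite -ltnS.
  by apply: mj; apply: leq_ltn_trans kj0; apply: leq_subr.
rewrite E coefG ka add0r in C.
have Dsk : Dv p s`_k.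
  move: ph C => [e he] [c hc].
  rewrite he -mulrA in hc.
  have hc' : e * s`_k = p * c by apply: (mulfI p0); rewrite hc mulrA.
  case: (pprime (ex_intro _ c hc')) => // [[f hf]].
  by exfalso; apply: ph2; exists f; rewrite he hf mulrA.
by apply: A; apply: DvD => //; apply: DvMr.
Qed.
End Core.

Section Main.
Variable R : idomainType.
Variables (p h : R) (a : nat) (mu : R -> nat).
Hypothesis p0 : p != 0.
Hypothesis pprime : forall r s : R, Dv p (r * s) -> Dv p r \/ Dv p s.
Hypothesis ph : Dv p h.
Hypothesis ph2 : ~ Dv (p * p) h.
Hypothesis a0 : (0 < a)%N.
Hypothesis mup : forall c, c != 0 -> (mu c < mu (p * c))%N.

Let G : {poly R} := 'X^a + h%:P.

Lemma red (u w s : {poly R}) : u * w = G * s -> (forall i, Dv p u`_i) ->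
  exists u' s', [/\ u = p%:P * u', (size u' <= size u)%N & u' * w = G * s'].
Proof.
move=> E hu.
have exP i : exists c, u`_i == p * c by have [c hc] := hu i; exists c; apply/eqP.
pose u' := \poly_(i < size u) xchoose (exP i).
have uE : u = p%:P * u'.
  apply/polyP => i; rewrite coefCM coef_poly.
  case: ltnP => hi; first exact/eqP/(xchooseP (exP i)).
  by rewrite mulr0 nth_default.
have hs : forall m k, (size s <= k + m)%N -> Dv p s`_k.
  elim => [|m IH] k hk.
    by rewrite addn0 in hk; rewrite nth_default //; apply: Dv0.
  have e1 : s`_k = (G * s)`_(k + a) - h * s`_(k + a).
    by rewrite /G coefG ltnNge leq_addl /= addnK addrK.
  rewrite e1 -E uE -mulrA coefCM.
  apply: DvB; first by exists ((u' * w)`_(k + a)).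
  apply: DvMl; apply: IH; lia.
have exS k : exists c, s`_k == p * c.
  by have [c hc] := hs (size s) k (leq_addl _ _); exists c; apply/eqP.
pose s' := \poly_(k < size s) xchoose (exS k).
have sE : s = p%:P * s'.
  apply/polyP => i; rewrite coefCM coef_poly.
  case: ltnP => hi; first exact/eqP/(xchooseP (exS i)).
  by rewrite mulr0 nth_default.
exists u', s'; split => //; first exact: size_poly.
have pP0 : p%:P != 0 :> {poly R} by rewrite polyC_eq0.
apply: (mulfI pP0); rewrite mulrA -uE E sE.
by rewrite mulrCA.
Qed.

Definition mup_poly (u : {poly R}) := (\sum_(i < a) mu u`_i)%N.

Lemma main_dom : forall N (u w s : {poly R}), (mup_poly u + mup_poly w < N)%N ->
  (size u <= a)%N -> (size w <= a)%N -> u * w = G * s -> u = 0 \/ w = 0.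
Proof.
elim => [//|N IH] u w s hN su sw E.
have [->|u0] := eqVneq u 0; first by left.
have [->|w0] := eqVneq w 0; first by right.
have dec : forall v v' : {poly R}, v != 0 -> (size v <= a)%N -> v = p%:P * v' ->
    (mup_poly v' < mup_poly v)%N.
  move=> v v' v0 sv vE.
  have v'0 : v' != 0 by apply/eqP => h0; move/eqP: v0; apply; rewrite vE h0 mulr0.
  have i0a : (size v' - 1 < a)%N.
    have : (size v' <= size v)%N by rewrite vE size_mul ?polyC_eq0 // size_polyC p0 add1n.
    move: (size_poly_gt0 v'); rewrite v'0; lia.
  rewrite /mup_poly (bigD1 (Ordinal i0a)) // [X in (_ < X)%N](bigD1 (Ordinal i0a)) //=.
  rewrite -addSn leq_add //.
    rewrite vE coefCM; apply: mup.
    by rewrite /= subn1 -lead_coefE lead_coef_eq0.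
  apply: leq_sum => i _; rewrite vE coefCM.
  have [->|ne] := eqVneq v'`_i 0; first by rewrite mulr0.
  by apply: ltnW; apply: mup.
case: (classic (exists i, ~ Dv p u`_i)) => [hu|hu].
  case: (classic (exists j, ~ Dv p w`_j)) => [hw|hw].
    by exfalso; apply: (core1 p0 pprime ph ph2 su sw E hu hw).
  have hw' : forall j, Dv p w`_j.
    by move=> j; apply: NNPP => hj; apply: hw; exists j.
  have E' : w * u = G * s by rewrite mulrC.
  have [w' [s' [wE sw' E2]]] := red E' hw'.
  have := dec _ _ w0 sw wE.
  have : (size w' <= a)%N by exact: (leq_trans sw' sw).
  move=> sw'a hlt.
  have [|w'0|u'0] := IH w' u s' _ sw'a su E2.
  - by move: hlt hN; lia.
  - by right; rewrite wE w'0 mulr0.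
  - by left.
have hu' : forall i, Dv p u`_i.
  by move=> i; apply: NNPP => hi; apply: hu; exists i.
have [u' [s' [uE su' E2]]] := red E hu'.
have := dec _ _ u0 su uE.
have : (size u' <= a)%N by exact: (leq_trans su' su).
move=> su'a hlt.
have [|u'0|w'0] := IH u' w s' _ su'a sw E2.
- by move: hlt hN; lia.
- by left; rewrite uE u'0 mulr0.
- by right.
Qed.
End Main.


Lemma Dv_dvdp (F : fieldType) (d x : {poly F}) : Dv d x <-> d %| x.
Proof.
split => [[c ->]|/dvdpP [q ->]]; first exact: dvdp_mulr.
by exists q; rewrite mulrC.
Qed.

Lemma exists_pi (F : fieldType) (b : nat) (c : F) : (0 < b)%N -> c != 0 -> (b%:R : F) != 0 ->
  exists pi : {poly F}, [/\ pi != 0, (1 < size pi)%N,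
    (forall r s, Dv pi (r * s) -> Dv pi r \/ Dv pi s),
    Dv pi ('X^b + c%:P) & ~ Dv (pi * pi) ('X^b + c%:P)].
Proof.
move=> b0 c0 bF.
set H : {poly F} := 'X^b + c%:P.
have H0 : H != 0.
  by rewrite -size_poly_eq0 /H size_polyDl ?size_polyXn ?size_polyC ?c0 //.
have sH : (1 < size H)%N.
  by rewrite /H size_polyDl ?size_polyXn ?size_polyC ?c0 // ltnS.
have [m [[pi [piH [spi spim]]] mmin]] : exists m, (exists pi : {poly F}, pi %| H /\ (1 < size pi)%N /\ size pi = m)
   /\ forall j, (j < m)%N -> ~ exists pi : {poly F}, pi %| H /\ (1 < size pi)%N /\ size pi = j.
  by apply: min_ex; exists (size H); exists H; rewrite dvdpp.
have pi0 : pi != 0 by rewrite -size_poly_eq0; move: spi; case: size.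
have minp : forall d, d %| pi -> (1 < size d)%N -> d %= pi.
  move=> d dp sd; rewrite -dvdp_size_eqp //.
  have := dvdp_leq pi0 dp; rewrite leq_eqVlt => /orP [//|lt].
  by exfalso; apply: (mmin (size d)); [rewrite -spim | exists d; split => //; apply: dvdp_trans dp piH].
have pprime : forall r s, Dv pi (r * s) -> Dv pi r \/ Dv pi s.
  move=> r s /Dv_dvdp hrs.
  case: (boolP (pi %| r)) => [/Dv_dvdp|nr]; first by left.
  right; apply/Dv_dvdp.
  have cop : coprimep pi r.
    rewrite coprimep_def.
    have g0 : gcdp pi r != 0 by rewrite gcdp_eq0 negb_and pi0.
    case: (ltngtP (size (gcdp pi r)) 1) => // hg.
      by move: hg g0; rewrite ltnS leqn0 size_poly_eq0 => ->.
    have := minp _ (dvdp_gcdl pi r) hg => e.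
    exfalso; move/negP: nr; apply.
    by rewrite -(eqp_dvdl _ e) dvdp_gcdr.
  by rewrite -(Gauss_dvdpr s cop).
exists pi; split => //; first exact/Dv_dvdp.
move/Dv_dvdp => /dvdpP [t Ht].
have dH : pi %| H^`().
  rewrite Ht !derivM.
  apply: dvdp_add; first by apply: dvdp_mull; apply: dvdp_mulIl.
  by apply: dvdp_mull; apply: dvdp_add; [apply: dvdp_mulIr| apply: dvdp_mulIl].
have dX : pi %| 'X^b.
  have e : H^`() * 'X = (b%:R : F) *: 'X^b.
    rewrite /H derivD derivC addr0 derivXn mulrnAl -exprSr prednK //.
    by rewrite scaler_nat.
  by rewrite -(dvdpZr _ _ bF) -e dvdp_mulr.
have : pi %| c%:P.
  by rewrite -(dvdp_addr _ dX).
move/(dvdp_leq); rewrite polyC_eq0 c0 => /(_ isT).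
by rewrite size_polyC c0 leqNgt spi.
Qed.


Section Mp.
Variables (k : fieldType) (n : nat).
Local Notation S := {mpoly k[n]}.

Lemma mpoly_id_ext (f : {rmorphism S -> S}) :
  (forall c, f c%:MP = c%:MP) -> (forall i, f 'X_i = 'X_i) -> forall p, f p = p.
Proof.
move=> hc hx p; rewrite [in RHS](mpolyE p) [in LHS](mpolyE p) rmorph_sum.
apply: eq_bigr => m _; rewrite -mul_mpolyC rmorphM hc mpolyXE_id rmorph_prod.
by congr (_ * _); apply: eq_bigr => i _; rewrite rmorphXn hx.
Qed.

Definition subs (v : 'I_n -> S) : {rmorphism S -> S} := mmap (@mpolyC n k) v.

Lemma subsX v l : subs v 'X_l = v l.
Proof. by rewrite /subs /= mmapX mmap1U. Qed.
Lemma subsC v c : subs v c%:MP = c%:MP.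
Proof. by rewrite /subs /= mmapC. Qed.

Definition sub0 (i : 'I_n) := subs (fun l => if l == i then 0 else 'X_l).

Lemma sub0_dv i p : Dv 'X_i (p - sub0 i p).
Proof.
have -> : p - sub0 i p = \sum_(m <- msupp p) (p@_m *: 'X_[m] - sub0 i (p@_m *: 'X_[m])).
  by rewrite sumrB -rmorph_sum -mpolyE.
apply: Dv_sum => m _; rewrite -mul_mpolyC rmorphM subsC -mulrBr; apply: DvMl.
rewrite /sub0 /subs /= mmapX /mmap1 (@mpolyXE_id n k m).
case: (posnP (m i)) => hm.
  rewrite [X in _ - X](eq_bigr (fun l => 'X_l ^+ m l)) ?subrr; first exact: Dv0.
  by move=> l _; case: eqP => // ->; rewrite hm !expr0.
rewrite [X in _ - X](bigD1 i) //= eqxx expr0n gtn_eqF // mul0r subr0.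
rewrite (bigD1 i) //=; apply: DvMr.
by exists ('X_i ^+ (m i).-1); rewrite -exprS prednK.
Qed.

Lemma subs_sumpow v (T : pred 'I_n) (a : 'I_n -> nat) :
  subs v (\sum_(l | T l) 'X_l ^+ a l) = \sum_(l | T l) v l ^+ a l.
Proof. by rewrite rmorph_sum; apply: eq_bigr => l _; rewrite rmorphXn subsX. Qed.

Lemma sub0_sumpow i (T : pred 'I_n) (a : 'I_n -> nat) : (forall l, 0 < a l)%N ->
  sub0 i (\sum_(l | T l) 'X_l ^+ a l) = \sum_(l | T l && (l != i)) 'X_l ^+ a l.
Proof.
move=> a0; rewrite subs_sumpow [RHS]big_mkcondr /=.
apply: eq_bigr => l _; case: (eqVneq l i) => //= _; by rewrite expr0n gtn_eqF.
Qed.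

Lemma meval_sumpow (v : 'I_n -> k) (T : pred 'I_n) (a : 'I_n -> nat) :
  meval v (\sum_(l | T l) ('X_l : S) ^+ a l) = \sum_(l | T l) v l ^+ a l.
Proof. by rewrite rmorph_sum; apply: eq_bigr => l _; rewrite rmorphXn /= mevalXU. Qed.

Lemma sumpow_neq0 (T : pred 'I_n) (a : 'I_n -> nat) z : (forall l, 0 < a l)%N -> T z ->
  \sum_(l | T l) ('X_l : S) ^+ a l != 0.
Proof.
move=> a0 Tz; apply/eqP => h.
have := congr1 (meval (fun l => if l == z then 1 else 0)) h.
rewrite meval_sumpow rmorph0 (bigD1 z) //= eqxx expr1n big1 ?addr0.
  by move/eqP; rewrite oner_eq0.
by move=> l /andP [_ /negbTE ->]; rewrite expr0n gtn_eqF.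
Qed.

Lemma meval0_sumpow (T : pred 'I_n) (a : 'I_n -> nat) : (forall l, 0 < a l)%N ->
  meval (fun _ => 0) (\sum_(l | T l) ('X_l : S) ^+ a l) = 0.
Proof.
by move=> a0; rewrite meval_sumpow big1 // => l _; rewrite expr0n gtn_eqF.
Qed.
End Mp.


Lemma G_prime (k : fieldType) n (a : 'I_n -> nat) (T : pred 'I_n) (x y z : 'I_n) :
  [pchar k] =i pred0 -> (forall l, 0 < a l)%N -> x != y -> x != z -> y != z ->
  T x -> T y -> T z ->
  forall P Q : {mpoly k[n]}, Dv (\sum_(l | T l) 'X_l ^+ a l) (P * Q) ->
    Dv (\sum_(l | T l) 'X_l ^+ a l) P \/ Dv (\sum_(l | T l) 'X_l ^+ a l) Q.
Proof.
move=> ch a0 xy xz yz Tx Ty Tz.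
set g := \sum_(l | T l) 'X_l ^+ a l.
set c := \sum_(l | T l && (l != x) && (l != y)) ('X_l : {mpoly k[n]}) ^+ a l.
have gE : g = 'X_x ^+ a x + ('X_y ^+ a y + c).
  by rewrite /g (bigD1 x) //= (bigD1 y) //= Ty eq_sym xy.
have c0 : c != 0.
  by apply: (@sumpow_neq0 k n _ _ z) => //; rewrite Tz eq_sym xz eq_sym yz.
pose hh (l : 'I_n) : {poly {poly {mpoly k[n]}}} :=
  if l == x then 'X else if l == y then ('X)%:P else ('X_l)%:P%:P.
pose Psi : {rmorphism {mpoly k[n]} -> {poly {poly {mpoly k[n]}}}} := mmap (polyC \o polyC \o (@mpolyC n k)) hh.
have PsiX l : Psi 'X_l = hh l by rewrite /Psi /= mmapX mmap1U.
have PsiC d : Psi d%:MP = d%:MP%:P%:P by rewrite /Psi /= mmapC.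
have Psic : Psi c = c%:P%:P.
  rewrite /c !rmorph_sum; apply: eq_bigr => l /andP [/andP [_ lx] ly].
  by rewrite !rmorphXn PsiX /hh (negbTE lx) (negbTE ly).
have Psig : Psi g = 'X^(a x) + ('X^(a y) + c%:P)%:P.
  rewrite gE !rmorphD !rmorphXn Psic !PsiX /hh eqxx eq_sym (negbTE xy) eqxx.
  by [].
pose E : {rmorphism {poly {poly {mpoly k[n]}}} -> {mpoly k[n]}} :=
  horner_eval ('X_x : {mpoly k[n]}) \o map_poly (horner_eval ('X_y : {mpoly k[n]})).
have EPsi : forall p, E (Psi p) = p.
  apply: (mpoly_id_ext (f := E \o Psi)) => [d|l] /=.
    by rewrite PsiC /= map_polyC /= !horner_evalE !hornerC.
  rewrite PsiX /hh; case: eqP => [->|_].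
    by rewrite map_polyX /= horner_evalE hornerX.
  case: eqP => [->|_].
    by rewrite map_polyC /= !horner_evalE hornerX hornerC.
  by rewrite map_polyC /= !horner_evalE !hornerC.
pose M : {rmorphism {poly {poly {mpoly k[n]}}} -> {poly {poly {fraction {mpoly k[n]}}}}} := map_poly (map_poly (@tofrac {mpoly k[n]})).
have tinj : injective (@tofrac {mpoly k[n]}) by move=> u v /eqP; rewrite tofrac_eq => /eqP.
have minj : injective (map_poly (@tofrac {mpoly k[n]})) by apply: map_inj_poly => //; rewrite rmorph0.
have Minj : injective M by apply: map_inj_poly => //; rewrite rmorph0.
have Msize w : size (M w) = size w by apply: size_map_inj_poly => //; rewrite rmorph0.
set D := Psi g.
have Dmon : D \is monic by rewrite /D Psig monicXnaddC.
have Dsize : size D = (a x).+1 by rewrite /D Psig size_XnaddC.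
have MD : M D = 'X^(a x) + ('X^(a y) + (tofrac c)%:P)%:P.
  by rewrite /D Psig rmorphD /= map_polyXn map_polyC /= rmorphD /= map_polyXn map_polyC.
have cF : tofrac c != 0 by rewrite tofrac_eq0.
have bF : ((a y)%:R : {fraction {mpoly k[n]}}) != 0.
  rewrite -(rmorph_nat (@tofrac {mpoly k[n]})) tofrac_eq0 -mpolyC_nat mpolyC_eq0.
  by move/pcharf0P: ch => ->; rewrite -lt0n.
have [pi [pi0 spi pprime ph ph2]] := exists_pi (a0 y) cF bF.
have mup : forall d : {poly {fraction {mpoly k[n]}}}, d != 0 -> (size d < size (pi * d)%R)%N.
  move=> d d0; rewrite size_mul // -subn1 addnC -addnBA; last exact: ltnW spi.
  by rewrite -{1}[size d]addn0 ltn_add2l subn_gt0.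
move=> P Q [t Ht].
have ED : E D = g := EPsi g.
have rE (U : {mpoly k[n]}) : Psi U = Pdiv.Ring.rdivp (Psi U) D * D + Pdiv.Ring.rmodp (Psi U) D.
  exact: Pdiv.RingMonic.rdivp_eq.
set q1 := Pdiv.Ring.rdivp (Psi P) D; set r1 := Pdiv.Ring.rmodp (Psi P) D.
set q2 := Pdiv.Ring.rdivp (Psi Q) D; set r2 := Pdiv.Ring.rmodp (Psi Q) D.
have sr1 : (size r1 <= a x)%N by rewrite -ltnS -Dsize Pdiv.Ring.ltn_rmodpN0 // monic_neq0.
have sr2 : (size r2 <= a x)%N by rewrite -ltnS -Dsize Pdiv.Ring.ltn_rmodpN0 // monic_neq0.
have e1 : r1 = Psi P - q1 * D by rewrite [in RHS](rE P) addrC addKr.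
have e2 : r2 = Psi Q - q2 * D by rewrite [in RHS](rE Q) addrC addKr.
have ePQ : Psi P * Psi Q = D * Psi t := etrans (esym (rmorphM Psi P Q)) (etrans (congr1 Psi Ht) (rmorphM Psi g t)).
have er : r1 * r2 = D * (Psi t - q1 * Psi Q - q2 * Psi P + q1 * q2 * D).
  by rewrite e1 e2; apply: alg_id.
have := congr1 M er; rewrite rmorphM rmorphM MD => er'.
have [hr|hr] := main_dom (R := {poly {fraction {mpoly k[n]}}}) (a:=a x) (mu := fun d : {poly {fraction {mpoly k[n]}}} => size d) pi0 pprime ph ph2 (a0 x) mup (leqnn _)
  (leq_trans (eq_leq (Msize r1)) sr1) (leq_trans (eq_leq (Msize r2)) sr2) er'.
  left; have r10 : r1 = 0 by apply: Minj; rewrite hr rmorph0.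
  exists (E q1); rewrite -[LHS]EPsi (rE P) -/r1 r10 addr0 (rmorphM E) ED.
  by rewrite mulrC.
right; have r20 : r2 = 0 by apply: Minj; rewrite hr rmorph0.
exists (E q2); rewrite -[LHS]EPsi (rE Q) -/r2 r20 addr0 (rmorphM E) ED.
by rewrite mulrC.
Qed.


Lemma three_others n (i : 'I_n) : (4 <= n)%N ->
  exists x y z : 'I_n, [/\ x != y, x != z, y != z & [/\ x != i, y != i & z != i]].
Proof.
move=> n4.
have h0 : (0 < n)%N by lia. have h1 : (1 < n)%N by lia.
have h2 : (2 < n)%N by lia. have h3 : (3 < n)%N by lia.
pose o0 := Ordinal h0; pose o1 := Ordinal h1; pose o2 := Ordinal h2; pose o3 := Ordinal h3.
have ne (u v : 'I_n) : (val u != val v) -> u != v by [].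
case: (eqVneq (val i) 0%N) => i0.
  by exists o1, o2, o3; do ![split]; apply: ne => //=; rewrite ?i0 // eq_sym ?i0.
case: (eqVneq (val i) 1%N) => i1.
  by exists o0, o2, o3; do ![split]; apply: ne => //=; rewrite ?i1 // eq_sym ?i1.
case: (eqVneq (val i) 2%N) => i2.
  by exists o0, o1, o3; do ![split]; apply: ne => //=; rewrite ?i2 // eq_sym.
by exists o0, o1, o2; do ![split]; apply: ne => //=; rewrite eq_sym.
Qed.

Lemma fS_sum (k : fieldType) n (a : 'I_n -> nat) :
  fS k a = \sum_(l | predT l) 'X_l ^+ a l.
Proof. by []. Qed.

Lemma Xi_neq0 (k : fieldType) n (i : 'I_n) : ('X_i : {mpoly k[n]}) != 0.
Proof.
apply/eqP => h; have := congr1 (meval (fun _ => 1 : k)) h.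
by rewrite mevalXU rmorph0 => /eqP; rewrite oner_eq0.
Qed.

Lemma sub0X (k : fieldType) n (i l : 'I_n) :
  sub0 k i 'X_l = if l == i then 0 else 'X_l.
Proof. exact: subsX. Qed.

Lemma notin (k : fieldType) n (a : 'I_n -> nat) (i j : 'I_n) :
  (4 <= n)%N -> (forall l, 0 < a l)%N -> i != j ->
  ~ exists r t, 'X_i = 'X_j * r + fS k a * t.
Proof.
move=> n4 a0 ij [r [t e]].
have := congr1 (sub0 k j) e.
rewrite rmorphD !rmorphM !sub0X eqxx mul0r add0r (negbTE ij).
rewrite fS_sum sub0_sumpow // => e2.
have := congr1 (sub0 k i) e2.
rewrite rmorphM sub0X eqxx sub0_sumpow // => e3.
have [z [zi zj]] : exists z : 'I_n, z != i /\ z != j.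
  have [x [y [w [xy xw yw [xi yi _]]]]] := three_others i n4.
  case: (eqVneq x j) => [xj|xj]; last by exists x.
  by exists y; split; [exact: yi| rewrite -xj eq_sym].
have gne : \sum_(l | predT l && (l != j) && (l != i)) ('X_l : {mpoly k[n]}) ^+ a l != 0.
  by apply: (@sumpow_neq0 k n _ _ z) => //=; rewrite zi zj.
have s0 : sub0 k i (sub0 k j t) = 0.
  by move/eqP: e3; rewrite eq_sym mulf_eq0 (negbTE gne) /= => /eqP.
have [q hq] := sub0_dv i (sub0 k j t); rewrite s0 subr0 in hq.
rewrite hq mulrCA in e2.
have e4 : 'X_i * (1 - (\sum_(l | predT l && (l != j)) 'X_l ^+ a l) * q) = 0 :> {mpoly k[n]}.
  apply/eqP; rewrite mulrBr mulr1 subr_eq0; apply/eqP; exact: e2.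
move/eqP: e4; rewrite mulf_eq0 (negbTE (Xi_neq0 k i)) /= subr_eq0 => /eqP e5.
have := congr1 (meval (fun _ => 0 : k)) e5.
by rewrite rmorph1 rmorphM /= meval0_sumpow // mul0r => /eqP; rewrite oner_eq0.
Qed.

Theorem lemma4p3 (k : fieldType) (n : nat) (a : 'I_n -> nat)
  (B : comNzRingType) (pi : {rmorphism {mpoly k[n]} -> B}) :
  [pchar k] =i pred0 ->
  (4 <= n)%N ->
  (forall i, 0 < a i)%N ->
  is_quotient_by (fS k a) pi ->
  (* (a) *)
  (gcdT (dvec a) = 1%N /\ typeT (dvec a) = cotypeT a) /\
  (* (b) *)
  (forall i : 'I_n,
     (gcd_hat (dvec a) i != 1%N <-> lcm_hat a i != lcmT a) /\
     (lcm_hat a i != lcmT a <-> i \in Jset a)) /\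
  (* (c) *)
  (forall i : 'I_n, homog_elt (dvec a) pi (dvec a i) (pi 'X_i) /\ prime_elt (pi 'X_i)) /\
  (forall i j : 'I_n, i != j -> ~ associates (pi 'X_i) (pi 'X_j)).
Proof.
move=> ch n4 a0 [surj ker].
have [hA hB] := part_ab n a n4 a0.
have kerE p q : pi p = pi q -> exists t, p - q = fS k a * t.
  by move=> e; apply/ker; rewrite rmorphB e subrr.
have piF : pi (fS k a) = 0 by apply/ker; exists 1; rewrite mulr1.
split; first exact: hA.
split; first exact: hB.
split; last first.
  move=> i j ij [u [_ hu]]; have [U hU] := surj u.
  rewrite -hU -rmorphM in hu.
  have [t ht] := kerE _ _ hu.
  apply: (notin n4 a0 ij); exists U, t.
  by rewrite -ht [_ * U]mulrC addrC subrK.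
move=> i; split.
  exists 'X_i; split => // m; rewrite msuppX inE => /eqP ->.
  rewrite (bigD1 i) //= mnm1E eqxx muln1 big1 ?addn0 // => l li.
  by rewrite mnm1E eq_sym (negbTE li) muln0.
have [x [y [z [xy xz yz [xi yi zi]]]]] := three_others i n4.
split.
- move=> h; have [q hq] := (ker 'X_i).1 h.
  have ix : i != x by rewrite eq_sym.
  by apply: (notin n4 a0 ix); exists 0, q; rewrite mulr0 add0r; exact: hq.
- move=> [v hv]; have [V hV] := surj v.
  rewrite -hV -rmorphM -(rmorph1 pi) in hv.
  have [t ht] := kerE _ _ hv.
  have := congr1 (meval (fun _ => 0 : k)) ht.
  rewrite rmorphB rmorph1 !rmorphM /= mevalXU fS_sum meval0_sumpow // !mul0r sub0r.
  by move/eqP; rewrite oppr_eq0 oner_eq0.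
set g := \sum_(l | predT l && (l != i)) ('X_l : {mpoly k[n]}) ^+ a l.
have sub0f : sub0 k i (fS k a) = g by rewrite fS_sum sub0_sumpow.
have fE : fS k a = 'X_i * 'X_i ^+ (a i).-1 + g.
  by rewrite -exprS prednK // fS_sum (bigD1 i).
have back p : Dv g (sub0 k i p) -> dvdr (pi 'X_i) (pi p).
  move=> [u hu]; have [r hr] := sub0_dv i p.
  exists (pi (r - 'X_i ^+ (a i).-1 * u)).
  by rewrite (@alg2 _ _ _ _ _ _ _ _ _ hr hu fE) rmorphD !rmorphM piF mul0r addr0.
move=> bx by_ [bc hc].
have [p hp] := surj bx; have [q hq] := surj by_; have [c hc'] := surj bc.
rewrite -hp -hq -hc' -!rmorphM in hc.
have [t ht] := kerE _ _ hc.
have := congr1 (sub0 k i) ht.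
rewrite rmorphB !rmorphM sub0X eqxx mul0r subr0 sub0f => e.
have := @G_prime k n a (fun l => predT l && (l != i)) x y z ch a0 xy xz yz xi yi zi
  (sub0 k i p) (sub0 k i q) (ex_intro _ _ e).
by case => [/back|/back]; [left; rewrite -hp | right; rewrite -hq].
Qed.
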